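(* (Dobinski's formula) Let $\lambda$ be a nonzero real number and $x$ a real number with $|\lambda x|<1$. Then for every integer $n\ge0$, \[ \mathrm{Bel}_{n,\lambda}(x)=e_{\lambda}^{-1}(x)\Big(x\frac{d}{dx}\Big)^{n}e_{\lambda}(x)=e_{\lambda}^{-1}(x)\sum_{k=0}^{\infty}\frac{(1)_{k,\lambda}}{k!}\,k^{n}x^{k}. \]
   Context: For nonzero real $\lambda$: $(1)_{0,\lambda}=1$, $(1)_{k,\lambda}=1(1-\lambda)\cdots(1-(k-1)\lambda)$ for $k\ge1$; $e_\lambda(x)=(1+\lambda x)^{1/\lambda}$ and $e_\lambda^{-1}(x)=(1+\lambda x)^{-1/\lambda}$. The new type degenerate Bell polynomials $\mathrm{Bel}_{n,\lambda}(x)$ are defined by the generating function $e_{\lambda}(xe^{t})\,e_{\lambda}^{-1}(x)=\sum_{n=0}^{\infty}\mathrm{Bel}_{n,\lambda}(x)\frac{t^{n}}{n!}$, i.e. $\big(\frac{1+\lambda xe^t}{1+\lambda x}\big)^{1/\lambda}$ expanded in powers of $t$. $(x\frac{d}{dx})^n$ denotes the $n$-fold iterate of the operator $f\mapsto xf'(x)$. *)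

(* Defs.v *)
From Stdlib Require Import Reals.
From Coquelicot Require Import Coquelicot.
Open Scope R_scope.

(* (1)_{k,lambda} = 1 (1 - lambda) ... (1 - (k-1) lambda); empty product = 1 *)
Fixpoint lam_falling (lam : R) (k : nat) : R :=
  match k with
  | O => 1
  | S k' => lam_falling lam k' * (1 - INR k' * lam)
  end.

Definition e_lam (lam x : R) : R := Rpower (1 + lam * x) (1 / lam).
Definition e_lam_inv (lam x : R) : R := Rpower (1 + lam * x) (- (1 / lam)).

Definition bel_gf (lam x : R) (t : R) : R :=
  e_lam lam (x * exp t) * e_lam_inv lam x.

(* Bel_{n,lambda}(x) := n-th Taylor coefficient times n!, i.e. the n-th
   t-derivative of the generating function at t = 0. *)
Definition Bel (n : nat) (lam x : R) : R := Derive_n (bel_gf lam x) n 0.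

Definition xD (f : R -> R) : R -> R := fun y => y * Derive f y.
Definition xD_iter (n : nat) (f : R -> R) : R -> R := Nat.iter n xD f.

(* Main.v *)
Require Import Defs.
From Stdlib Require Import Reals Lra Lia.
From Coquelicot Require Import Coquelicot.
Open Scope R_scope.

Lemma ratio_ex (b : nat -> R) (q : R) (N : nat) :
  0 <= q < 1 -> (forall k, 0 <= b k) ->
  (forall k, (N <= k)%nat -> b (S k) <= q * b k) -> ex_series b.
Proof.
  intros Hq Hb Hr.
  apply (ex_series_incr_n b N).
  assert (Hd : forall k, b (N + k)%nat <= b N * q ^ k).
  { induction k.
    - rewrite Nat.add_0_r. simpl; lra.
    - replace (N + S k)%nat with (S (N + k)) by lia.
      eapply Rle_trans. apply Hr. lia.
      simpl. rewrite <- Rmult_assoc, (Rmult_comm (b N) q), Rmult_assoc.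
      apply Rmult_le_compat_l; lra. }
  apply (@ex_series_le R_AbsRing R_CompleteNormedModule _ (fun k => b N * q ^ k)).
  - intros k. rewrite Rabs_pos_eq by apply Hb. apply Hd.
  - apply (ex_series_scal_l (b N) (fun k => q ^ k)). apply ex_series_geom.
    rewrite Rabs_pos_eq; lra.
Qed.

Lemma loc_lt (h : R -> R) t c : continuous h t -> h t < c -> locally t (fun s => h s < c).
Proof.
  intros Hc Ht. apply (Hc (fun z => z < c)). apply (locally_open (fun z => z < c)). apply open_lt. auto. exact Ht.
Qed.

Section S.
Variable lam : R.
Hypothesis Hlam : lam <> 0.

Definition a (k : nat) : R := lam_falling lam k / INR (Factorial.fact k).

Lemma a_rec k : INR (S k) * a (S k) = a k * (1 - INR k * lam).
Proof.
  unfold a. simpl lam_falling.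
  replace (Factorial.fact (S k)) with (S k * Factorial.fact k)%nat by reflexivity.
  rewrite mult_INR. field. split. apply INR_fact_neq_0. apply not_0_INR. lia.
Qed.

Lemma a0 : a 0 = 1.
Proof. unfold a. simpl. field. Qed.

Lemma a_S k : a (S k) = a k * (1 - INR k * lam) / INR (S k).
Proof. rewrite <- a_rec. field. apply not_0_INR. lia. Qed.

Lemma cv_disk_a r : 0 <= r -> Rabs lam * r < 1 -> CV_disk a r.
Proof.
  intros Hr Hmr. set (mu := Rabs lam). change (mu * r < 1) in Hmr.
  set (q := (1 + mu * r) / 2).
  assert (Hmu : 0 < mu) by (apply Rabs_pos_lt; auto).
  destruct (nfloor_ex (Rabs (r - q) * 2 / (1 - mu * r))) as [N HN].
  { apply Rmult_le_pos. apply Rmult_le_pos. apply Rabs_pos. lra.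
    apply Rlt_le, Rinv_0_lt_compat. lra. }
  apply (ratio_ex _ q (S N)).
  - assert (0 <= mu*r) by (apply Rmult_le_pos; lra). unfold q; split; lra.
  - intros k; apply Rabs_pos.
  - intros k Hk.
    rewrite a_S. simpl pow.
    replace (a k * (1 - INR k * lam) / INR (S k) * (r * r ^ k))
      with ((a k * r ^ k) * ((1 - INR k * lam) * r / INR (S k))) by
      (field; apply not_0_INR; lia).
    rewrite Rabs_mult, Rmult_comm. apply Rmult_le_compat_r. apply Rabs_pos.
    assert (HS : 0 < INR (S k)) by (apply lt_0_INR; lia).
    rewrite Rabs_div by lra. rewrite (Rabs_pos_eq (INR (S k))) by lra.
    apply Rmult_le_reg_r with (INR (S k)); auto.
    unfold Rdiv. rewrite Rmult_assoc, Rinv_l, Rmult_1_r by lra.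
    rewrite Rabs_mult, (Rabs_pos_eq r) by lra.
    assert (H1 : Rabs (1 - INR k * lam) <= 1 + INR k * mu).
    { eapply Rle_trans. apply Rabs_triang. rewrite Rabs_Ropp, Rabs_R1, Rabs_mult, (Rabs_pos_eq (INR k)) by apply pos_INR. unfold mu; lra. }
    assert (Hk' : INR N + 1 <= INR k).
    { replace (INR N + 1) with (INR (S N)) by (rewrite S_INR; lra). apply le_INR; lia. }
    assert (H2 : r - q <= INR k * ((1 - mu * r)/2)).
    { assert (Rabs (r - q) * 2 / (1 - mu * r) * ((1 - mu*r)/2) = Rabs (r - q)) by (field; lra).
      assert (r - q <= Rabs (r - q)) by apply Rle_abs.
      assert (Rabs (r - q) * 2 / (1 - mu * r) * ((1 - mu*r)/2) <= INR k * ((1 - mu * r)/2)).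
      { apply Rmult_le_compat_r. lra. lra. }
      lra. }
    rewrite S_INR.
    apply Rle_trans with ((1 + INR k * mu) * r). apply Rmult_le_compat_r; lra.
    unfold q in *. nra.
Qed.
End S.

Section T.
Variable lam : R.
Hypothesis Hlam : lam <> 0.
Let E := e_lam lam.
Let a := a lam.
Definition D (y : R) := Rabs (lam * y) < 1.

Lemma D_pos y : D y -> 0 < 1 + lam * y.
Proof. unfold D; intros H. apply Rabs_def2 in H. lra. Qed.

Lemma rad_a y : D y -> Rbar_lt (Rabs y) (CV_radius a).
Proof.
  intros H. unfold D in H. set (mu := Rabs lam).
  assert (Hmu : 0 < mu) by (apply Rabs_pos_lt; auto).
  rewrite Rabs_mult in H. change (mu * Rabs y < 1) in H.
  assert (Hy : Rabs y < / mu).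
  { apply Rmult_lt_reg_l with mu; auto. rewrite Rinv_r; lra. }
  set (r := (Rabs y + / mu) / 2).
  assert (Hr : CV_disk a r).
  { apply cv_disk_a; auto. unfold r. assert (0 <= Rabs y) by apply Rabs_pos. lra.
    change (mu * r < 1). unfold r.
    replace (mu * ((Rabs y + / mu) / 2)) with ((mu * Rabs y + 1)/2) by (field; lra). lra. }
  apply Rbar_lt_le_trans with (Finite r).
  - simpl. unfold r. lra.
  - apply (proj1 (Lub_Rbar_correct (CV_disk a))). exact Hr.
Qed.

Lemma loc_D y : D y -> locally y D.
Proof.
  intros H. apply (loc_lt (fun z => Rabs (lam * z))); auto.
  apply continuous_Rabs_comp. apply continuity_pt_filterlim. apply derivable_continuous_pt. apply derivable_pt_scal. apply derivable_pt_id.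
Qed.

Lemma incr_der (c : nat -> R) k : PS_incr_1 (PS_derive c) k = INR k * c k.
Proof. destruct k; simpl. rewrite Rmult_0_l. reflexivity. unfold PS_derive. reflexivity. Qed.

Lemma ODE y : D y -> (1 + lam * y) * PSeries (PS_derive a) y = PSeries a y.
Proof.
  intros Hy.
  rewrite Rmult_plus_distr_r, Rmult_1_l, Rmult_assoc, <- PSeries_incr_1, <- PSeries_scal, <- PSeries_plus.
  - apply PSeries_ext; intros k. unfold PS_plus, PS_scal. rewrite incr_der. unfold PS_derive.
    unfold a. rewrite a_rec by auto. unfold scal, plus; simpl; unfold mult, plus; simpl. ring.
  - apply CV_radius_inside. rewrite CV_radius_derive. apply rad_a; auto.
  - apply CV_radius_inside. rewrite CV_radius_scal by auto. rewrite CV_radius_incr_1, CV_radius_derive. apply rad_a; auto.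
Qed.

Definition hh (z : R) := PSeries a z * exp (- (1/lam) * ln (1 + lam * z)).

Lemma hh_der z : D z -> is_derive hh z 0.
Proof.
  intros Hz. pose proof (D_pos z Hz). unfold hh. auto_derive.
  - split; auto. apply ex_derive_PSeries. apply rad_a; auto.
  - change (Derive (fun x : R => PSeries a x) z) with (Derive (PSeries a) z).
    rewrite Derive_PSeries by (apply rad_a; auto).
    rewrite <- (ODE z Hz). field. lra.
Qed.

Lemma L0 y : D y -> E y = PSeries a y.
Proof.
  intros Hy.
  assert (Hc : forall z, Rmin 0 y <= z <= Rmax 0 y -> D z).
  { intros z Hz. unfold D in *. rewrite Rabs_mult in *.
    eapply Rle_lt_trans; [|exact Hy]. apply Rmult_le_compat_l. apply Rabs_pos.
    unfold Rmin, Rmax in Hz. destruct (Rle_dec 0 y).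
    - rewrite !Rabs_pos_eq; lra.
    - rewrite !Rabs_left1; lra. }
  destruct (MVT_gen hh 0 y (fun _ => 0)) as [c [_ Hmvt]].
  - intros z Hz. apply hh_der. apply Hc. lra.
  - intros z Hz. apply continuity_pt_filterlim. apply (@ex_derive_continuous R_AbsRing R_NormedModule).
    eexists. apply hh_der. apply Hc. lra.
  - rewrite Rmult_0_l in Hmvt.
    assert (H0 : hh 0 = 1).
    { unfold hh. rewrite PSeries_0. unfold a. rewrite a0. rewrite Rmult_0_r, Rplus_0_r, ln_1.
      rewrite Rmult_0_r, exp_0. ring. }
    assert (H1 : hh y = 1) by lra.
    unfold hh in H1. unfold E, e_lam, Rpower.
    set (L := ln (1 + lam * y)) in *.
    assert (exp (1 / lam * L) * exp (- (1 / lam) * L) = 1).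
    { rewrite <- exp_plus. replace (1 / lam * L + - (1 / lam) * L) with 0 by ring. apply exp_0. }
    assert (0 < exp (- (1 / lam) * L)) by apply exp_pos.
    nra.
Qed.
End T.

Section U.
Variable lam : R.
Hypothesis Hlam : lam <> 0.

Definition b (n k : nat) : R := INR k ^ n * a lam k.
Definition G (n : nat) := xD_iter n (e_lam lam).

Lemma b_S n k : b (S n) k = PS_incr_1 (PS_derive (b n)) k.
Proof. rewrite incr_der. unfold b; simpl; ring. Qed.

Lemma rad_b n y : D lam y -> Rbar_lt (Rabs y) (CV_radius (b n)).
Proof.
  intros Hy. replace (CV_radius (b n)) with (CV_radius (a lam)). apply rad_a; auto.
  induction n.
  - apply CV_radius_ext. intros k; unfold b; simpl; ring.
  - rewrite IHn. rewrite (CV_radius_ext _ _ (b_S n)). rewrite CV_radius_incr_1, CV_radius_derive. reflexivity.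
Qed.

Lemma L1 n y : D lam y -> G n y = PSeries (b n) y.
Proof.
  revert y. induction n; intros y Hy.
  - unfold G; simpl. rewrite L0 by auto. apply PSeries_ext. intros k; unfold b; simpl; ring.
  - change (G (S n) y) with (y * Derive (G n) y).
    rewrite (Derive_ext_loc _ (PSeries (b n))).
    + rewrite Derive_PSeries by (apply rad_b; auto).
      rewrite <- PSeries_incr_1. apply PSeries_ext. intros k. rewrite b_S. reflexivity.
    + apply (filter_imp (D lam)). intros z Hz. apply IHn; auto. apply loc_D; auto.
Qed.

Lemma L2 n y : D lam y -> is_derive (G n) y (PSeries (PS_derive (b n)) y).
Proof.
  intros Hy. apply (is_derive_ext_loc (PSeries (b n))).
  - apply (filter_imp (D lam)). intros z Hz. symmetry. apply L1; auto. apply loc_D; auto.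
  - apply is_derive_PSeries. apply rad_b; auto.
Qed.

Lemma L3 x n t : D lam (x * exp t) -> Derive_n (fun s => e_lam lam (x * exp s)) n t = G n (x * exp t).
Proof.
  revert t. induction n; intros t Ht.
  - reflexivity.
  - simpl Derive_n. rewrite (Derive_ext_loc _ (fun s => G n (x * exp s))).
    + apply is_derive_unique.
      change (G (S n) (x * exp t)) with ((x * exp t) * Derive (G n) (x * exp t)).
      rewrite (is_derive_unique _ _ _ (L2 n _ Ht)).
      apply (is_derive_comp (G n) (fun s => x * exp s)). apply L2; auto.
      auto_derive. auto. ring.
    + apply (filter_imp (fun s => D lam (x * exp s))). intros z Hz. apply IHn; auto.
      apply (loc_lt (fun s => Rabs (lam * (x * exp s)))); auto.
      apply continuous_Rabs_comp. apply continuity_pt_filterlim. apply derivable_continuous_pt.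
      apply derivable_pt_scal. apply derivable_pt_scal. apply derivable_pt_exp.
Qed.
End U.

Theorem theorem6 (lam x : R) (n : nat) :
  lam <> 0 -> Rabs (lam * x) < 1 ->
  Bel n lam x = e_lam_inv lam x * xD_iter n (e_lam lam) x /\
  is_series (fun k : nat => lam_falling lam k / INR (Factorial.fact k) * INR k ^ n * x ^ k)
            (xD_iter n (e_lam lam) x).
Proof.
  intros Hlam Hx. split.
  - unfold Bel. rewrite (Derive_n_ext _ (fun t => e_lam_inv lam x * e_lam lam (x * exp t))).
    + rewrite Derive_n_scal_l. rewrite (L3 lam Hlam x n 0).
      * rewrite exp_0, Rmult_1_r. reflexivity.
      * rewrite exp_0, Rmult_1_r. exact Hx.
    + intros t. unfold bel_gf. apply Rmult_comm.
  - change (xD_iter n (e_lam lam) x) with (G lam n x). rewrite L1 by auto.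
    eapply is_series_ext; [|apply PSeries_correct, CV_radius_inside, rad_b; auto].
    intros k. unfold b, a, scal; simpl; unfold mult; simpl. rewrite pow_n_pow. ring.
Qed.
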